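(* Let $a,b\in\mathbb{H}$ have norm one and let $T_{a,b}(x)=axb$. Then $\psi(\psi(y)\bar x+yx)=\psi(y)\bar x+yx$ holds for all $x,y\in\mathbb{H}$ with $\psi=T_{a,b}$ if and only if $a=b=\pm1$, i.e. $T_{a,b}=I_{\mathbb{H}}$.
   Context: $\bar x$ denotes quaternion conjugation and $I_{\mathbb{H}}$ the identity map. *)

(* Defs.v *)
(* real quaternions H = R + Ri + Rj + Rk over a realType R. *)
From mathcomp Require Import all_boot all_order all_algebra.
From mathcomp Require Import reals.
Set Implicit Arguments. Unset Strict Implicit. Unset Printing Implicit Defensive.
Import Order.TTheory GRing.Theory Num.Theory.
Local Open Scope ring_scope.

Record quat (R : Type) := Quat { qr : R; qi : R; qj : R; qk : R }.

Section Quat.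
Variable R : realType.

Definition qadd (x y : quat R) : quat R :=
  Quat (qr x + qr y) (qi x + qi y) (qj x + qj y) (qk x + qk y).

Definition qopp (x : quat R) : quat R :=
  Quat (- qr x) (- qi x) (- qj x) (- qk x).

(* Hamilton product: i^2 = j^2 = k^2 = ijk = -1 *)
Definition qmul (x y : quat R) : quat R :=
  Quat (qr x * qr y - qi x * qi y - qj x * qj y - qk x * qk y)
       (qr x * qi y + qi x * qr y + qj x * qk y - qk x * qj y)
       (qr x * qj y - qi x * qk y + qj x * qr y + qk x * qi y)
       (qr x * qk y + qi x * qj y - qj x * qi y + qk x * qr y).

Definition qconj (x : quat R) : quat R :=
  Quat (qr x) (- qi x) (- qj x) (- qk x).

Definition qone : quat R := Quat 1 0 0 0.

Definition qnorm (x : quat R) : R :=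
  Num.sqrt (qr x ^+ 2 + qi x ^+ 2 + qj x ^+ 2 + qk x ^+ 2).

Definition Tab (a b x : quat R) : quat R := qmul (qmul a x) b.

End Quat.

(* Main.v *)
Require Import Defs.
From mathcomp Require Import all_boot all_order all_algebra.
From mathcomp Require Import reals.
From mathcomp Require Import ring lra.
Import Order.TTheory GRing.Theory Num.Theory.
Set Implicit Arguments. Unset Strict Implicit.
Local Open Scope ring_scope.

Lemma qeq (R : Type) (p q : quat R) : qr p = qr q -> qi p = qi q -> qj p = qj q -> qk p = qk q -> p = q.
Proof. by case: p => ????; case: q => ???? /= -> -> -> ->. Qed.

Ltac qs := rewrite /Tab /qmul /qadd /qopp /qconj /qone; cbn [qr qi qj qk].
Ltac qring := apply: qeq; qs; ring.
Ltac comps E := move: (congr1 (@qr _) E) (congr1 (@qi _) E) (congr1 (@qj _) E) (congr1 (@qk _) E); qs.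

Section Aux.
Variable R : realType.
Implicit Types p q y a b c u v w x z t : quat R.



Definition nq p := qr p ^+ 2 + qi p ^+ 2 + qj p ^+ 2 + qk p ^+ 2.
Definition qI : quat R := Quat 0 1 0 0.
Definition qJ : quat R := Quat 0 0 1 0.

Lemma sq0 (x y : R) : x ^+ 2 + y ^+ 2 = 0 -> x = 0.
Proof.
move=> h; have : x ^+ 2 = 0.
  have := sqr_ge0 x; have := sqr_ge0 y; lra.
by move/eqP; rewrite sqrf_eq0 => /eqP.
Qed.

Lemma sq0' (x y z : R) : x ^+ 2 + y ^+ 2 + z ^+ 2 = 0 -> [/\ x = 0, y = 0 & z = 0].
Proof.
move=> h; have := sqr_ge0 x; have := sqr_ge0 y; have := sqr_ge0 z => hz hy hx.
have hx0 : x ^+ 2 = 0 by lra.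
have hy0 : y ^+ 2 = 0 by lra.
have hz0 : z ^+ 2 = 0 by lra.
by split; apply/eqP; rewrite -sqrf_eq0; apply/eqP.
Qed.

Lemma norm1 p : qnorm p = 1 -> nq p = 1.
Proof.
rewrite /qnorm /nq => h.
have h0 : 0 <= qr p ^+ 2 + qi p ^+ 2 + qj p ^+ 2 + qk p ^+ 2 by nra.
by rewrite -(sqr_sqrtr h0) h expr1n.
Qed.

Lemma left_inv p q : nq p = 1 -> qmul p q = qone R -> q = qconj p.
Proof.
move=> hn e.
have : qmul (qconj p) (qmul p q) = Quat (nq p * qr q) (nq p * qi q) (nq p * qj q) (nq p * qk q).
  rewrite /nq; qring.
rewrite e hn !mul1r => h.
have -> : q = Quat (qr q) (qi q) (qj q) (qk q) by case: q {e h}.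
rewrite -h; qring.
Qed.

Lemma rot_fix p : nq p = 1 -> qmul (qmul p qI) (qconj p) = qI ->
  qmul (qmul p qJ) (qconj p) = qJ -> qi p = 0 /\ qj p = 0 /\ qk p = 0.
Proof.
rewrite /nq => hn e1 e2.
have f1 := congr1 (@qi R) e1; have f2 := congr1 (@qj R) e2.
move: f1 f2; rewrite /qI /qJ; qs => f1 f2.
have h23 : qj p ^+ 2 + qk p ^+ 2 = 0 by lra.
have h13 : qi p ^+ 2 + qk p ^+ 2 = 0 by lra.
split; [|split].
- exact: (@sq0 _ _ h13).
- exact: (@sq0 _ _ h23).
- by rewrite addrC in h23; exact: (@sq0 _ _ h23).
Qed.

Lemma qadd_cancel x t y : qadd x t = qadd t y -> x = y.
Proof. move=> E; comps E => e1 e2 e3 e4; apply: qeq; lra. Qed.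

Lemma Tab_real (al be : R) x : Tab (Quat al 0 0 0) (Quat be 0 0 0) x =
  Quat (al * be * qr x) (al * be * qi x) (al * be * qj x) (al * be * qk x).
Proof. qring. Qed.

Lemma Tab_id1 x : Tab (qone R) (qone R) x = x. Proof. qring. Qed.
Lemma Tab_idm1 x : Tab (qopp (qone R)) (qopp (qone R)) x = x. Proof. qring. Qed.


Lemma qmulA x y z : qmul x (qmul y z) = qmul (qmul x y) z. Proof. qring. Qed.
Lemma qmulDr x y z : qmul x (qadd y z) = qadd (qmul x y) (qmul x z). Proof. qring. Qed.
Lemma qmulDl x y z : qmul (qadd y z) x = qadd (qmul y x) (qmul z x). Proof. qring. Qed.
Lemma qmulx1 x : qmul x (qone R) = x. Proof. qring. Qed.
Lemma qconj1 : qconj (qone R) = qone R. Proof. qring. Qed.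

Lemma G_psiw a b : qmul (qmul a (qadd a b)) b = qadd (qmul (qmul a a) b) (qmul a (qmul b b)).
Proof. qring. Qed.
Lemma G_e1 w b : qadd (qmul (qopp w) (qopp b)) (qmul w b) = qadd (qmul w b) (qmul w b).
Proof. qring. Qed.
Lemma G_e2 a b w : Tab a b (qadd (qmul w b) (qmul w b)) =
  qadd (qmul (qmul a w) (qmul b b)) (qmul (qmul a w) (qmul b b)).
Proof. by rewrite /Tab qmulDr qmulDl !qmulA. Qed.
Lemma G_aw a b : qmul a (qadd a b) = qadd (qmul a a) (qmul a b). Proof. qring. Qed.
Lemma G_wb a b : qmul (qadd a b) b = qadd (qmul a b) (qmul b b). Proof. qring. Qed.
Lemma G_fin c : qadd (qmul (qadd (qopp (qone R)) c) (qopp (qone R)))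
                     (qmul (qadd (qopp (qone R)) c) (qopp (qone R)))
  = qadd (qadd c (qopp (qone R))) (qadd c (qopp (qone R))) -> c = qone R.
Proof. move=> E; comps E => e1 e2 e3 e4; apply: qeq; qs; lra. Qed.
Lemma G_pw a b : qadd (qmul (qopp (qone R)) b) (qmul a (qopp (qone R))) = qopp (qadd a b).
Proof. qring. Qed.

Lemma qmulNN x y : qmul (qopp x) (qopp y) = qmul x y. Proof. qring. Qed.
Lemma G_p' a u v : qmul (qmul a (qadd u (qopp v))) (qopp a) =
  qadd (qmul (qmul a v) a) (qopp (qmul (qmul a u) a)).
Proof. qring. Qed.

Lemma G_z a y : qadd (qmul (Tab a (qopp a) y) (qopp a)) (qmul y a) =
  qadd (qmul (qmul a y) (qmul a a)) (qmul y a).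
Proof. by rewrite /Tab -qmulA qmulNN. Qed.
Lemma G_z2 u v : qadd (qmul u (qopp (qone R))) v = qadd v (qopp u). Proof. qring. Qed.
Lemma G_p a y : Tab a (qopp a) (qadd (qmul y a) (qopp (qmul a y))) =
  qadd (qmul (qmul a a) (qmul y a)) (qopp (qmul (qmul a y) (qmul a a))).
Proof. by rewrite /Tab G_p' !qmulA. Qed.
Lemma G_fin2 u v : qadd (qmul (qopp (qone R)) v) (qopp (qmul u (qopp (qone R))))
   = qadd v (qopp u) -> u = v.
Proof. move=> E; comps E => e1 e2 e3 e4; apply: qeq; lra. Qed.

End Aux.

Theorem lemma9 (R : realType) (a b : quat R) :
  qnorm a = 1 -> qnorm b = 1 ->
  ((forall x y : quat R,
      let psi := Tab a b in
      psi (qadd (qmul (psi y) (qconj x)) (qmul y x))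
      = qadd (qmul (psi y) (qconj x)) (qmul y x))
   <-> (a = b /\ (a = qone R \/ a = qopp (qone R)))).
Proof.
move=> /norm1 na /norm1 nb; split; last first.
  by case=> <- [->|->] x y /=; rewrite ?Tab_id1 ?Tab_idm1.
move=> H.
have inv y : qmul (qmul (qmul a a) y) (qmul b b) = y.
  have E : Tab a b (qadd (qmul (Tab a b y) (qconj (qone R))) (qmul y (qone R)))
     = qadd (qmul (Tab a b y) (qconj (qone R))) (qmul y (qone R)) := H (qone R) y.
  rewrite qconj1 !qmulx1 {1}/Tab qmulDr qmulDl in E.
  have E' := qadd_cancel E.
  by rewrite -{2}E' /Tab !qmulA.
have AB : qmul (qmul a a) (qmul b b) = qone R.
  by have := inv (qone R); rewrite qmulx1.
have nA : nq (qmul a a) = 1.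
  have : nq (qmul a a) = nq a ^+ 2 by rewrite /nq; qs; ring.
  by rewrite na expr1n.
have Bc := left_inv nA AB.
have [A1 [A2 A3]] : qi (qmul a a) = 0 /\ qj (qmul a a) = 0 /\ qk (qmul a a) = 0.
  by have := rot_fix nA; rewrite -Bc; apply; exact: inv.
have B0 : qr (qmul b b) = qr (qmul a a) by rewrite Bc.
have B1 : qi (qmul b b) = 0 by rewrite Bc /qconj; cbn [qi qj qk]; rewrite A1 oppr0.
have B2 : qj (qmul b b) = 0 by rewrite Bc /qconj; cbn [qi qj qk]; rewrite A2 oppr0.
have B3 : qk (qmul b b) = 0 by rewrite Bc /qconj; cbn [qi qj qk]; rewrite A3 oppr0.
have A0 : qr (qmul a a) = qr (qmul a a) by [].
move: na nb A1 A2 A3 B0 B1 B2 B3; rewrite /nq; qs => na nb A1 A2 A3 B0 B1 B2 B3.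
have [a0z|a0nz] := eqVneq (qr a) 0.
- rewrite a0z in na A1 A2 A3 B0.
  have aa : qmul a a = qopp (qone R) by apply: qeq; qs; rewrite ?a0z; lra.
  have b0z : qr b = 0.
    have h : qr b ^+ 2 = 0 by lra.
    by apply/eqP; rewrite -sqrf_eq0; apply/eqP.
  rewrite b0z in nb B0 B1 B2 B3.
  have bb : qmul b b = qopp (qone R) by apply: qeq; qs; rewrite ?b0z; lra.
  have cb : qconj b = qopp b by apply: qeq; qs; rewrite ?b0z; lra.
  have psiw : Tab a b (qadd a b) = qopp (qadd a b) by rewrite /Tab G_psiw aa bb G_pw.
  have E : Tab a b (qadd (qmul (Tab a b (qadd a b)) (qconj b)) (qmul (qadd a b) b))
     = qadd (qmul (Tab a b (qadd a b)) (qconj b)) (qmul (qadd a b) b) := H b (qadd a b).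
  rewrite psiw cb G_e1 G_e2 bb G_aw aa G_wb bb in E.
  have ab1 := G_fin E.
  move: (congr1 (@qr R) ab1); qs; rewrite a0z b0z => r.
  have hs : (qi a + qi b) ^+ 2 + (qj a + qj b) ^+ 2 + (qk a + qk b) ^+ 2 = 0 by lra.
  have [s1 s2 s3] := sq0' hs.
  have bopp : b = qopp a by apply: qeq; qs; rewrite ?a0z ?b0z; lra.
  rewrite bopp in H.
  have ca : qconj a = qopp a by apply: qeq; qs; rewrite ?a0z; lra.
  have comm y : qmul a y = qmul y a.
    have E2 : Tab a (qopp a) (qadd (qmul (Tab a (qopp a) y) (qconj a)) (qmul y a))
       = qadd (qmul (Tab a (qopp a) y) (qconj a)) (qmul y a) := H a y.
    rewrite ca G_z aa G_z2 G_p aa in E2.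
    exact: G_fin2 E2.
  have c1 := comm (qI R); have c2 := comm (qJ R).
  move: c1 c2; rewrite /qI /qJ => c1 c2.
  comps c1 => c11 c12 c13 c14; comps c2 => c21 c22 c23 c24.
  rewrite a0z in c11 c12 c13 c14 c21 c22 c23 c24.
  have a1z : qi a = 0 by lra.
  have a2z : qj a = 0 by lra.
  have a3z : qk a = 0 by lra.
  rewrite a1z a2z a3z in na; have h10 : (1:R) = 0 by lra.
  by move: (oner_neq0 R); rewrite h10 eqxx.
- have a1z : qi a = 0.
    have h : qr a * qi a = 0 by lra.
    by move/eqP: h; rewrite mulf_eq0 (negPf a0nz) /= => /eqP.
  have a2z : qj a = 0.
    have h : qr a * qj a = 0 by lra.
    by move/eqP: h; rewrite mulf_eq0 (negPf a0nz) /= => /eqP.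
  have a3z : qk a = 0.
    have h : qr a * qk a = 0 by lra.
    by move/eqP: h; rewrite mulf_eq0 (negPf a0nz) /= => /eqP.
  rewrite a1z a2z a3z in na B0.
  have a0sq : qr a ^+ 2 = 1 by lra.
  have hb : qi b ^+ 2 + qj b ^+ 2 + qk b ^+ 2 = 0 by lra.
  have [b1z b2z b3z] := sq0' hb.
  have E : Tab a b (qadd (qmul (Tab a b (qone R)) (qconj (qI R))) (qmul (qone R) (qI R)))
     = qadd (qmul (Tab a b (qone R)) (qconj (qI R))) (qmul (qone R) (qI R)) := H (qI R) (qone R).
  have ea : a = Quat (qr a) 0 0 0 by apply: qeq; rewrite /= ?a1z ?a2z ?a3z.
  have eb : b = Quat (qr b) 0 0 0 by apply: qeq; rewrite /= ?b1z ?b2z ?b3z.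
  move: E; rewrite ea eb !Tab_real /qI => E.
  comps E => e1 e2 e3 e4.
  have hs : (1 - qr a * qr b) ^+ 2 = 0 by lra.
  have s1 : qr a * qr b = 1.
    by move/eqP: hs; rewrite sqrf_eq0 subr_eq0 => /eqP <-.
  have hb0 : qr b = qr a by rewrite -[qr b]mul1r -a0sq expr2 -mulrA s1 mulr1.
  split.
    by apply: qeq; rewrite ?hb0 ?a1z ?b1z ?a2z ?b2z ?a3z ?b3z.
  have : (qr a - 1) * (qr a + 1) = 0 by lra.
  move/eqP; rewrite mulf_eq0 => /orP [/eqP h|/eqP h]; [left|right];
    apply: qeq; qs; rewrite ?a1z ?a2z ?a3z; lra.
Qed.
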